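(* Let $m\ge 2$, let $f:\mathbb{R}^n\to\mathbb{R}$ be convex, let $\mathbf{x}_0\in\mathbb{R}^n$ not be a minimizer of $f$, let $\lambda\ge 0$, let $\mathbf{z}\in\mathbb{R}^m$ be nonzero and set $\bar{\mathbf{z}}=\sqrt m\,\mathbf{z}$. Write $\delta=\delta(\lambda\partial f(\mathbf{x}_0))$, let $\gamma_m=\sqrt2\,\Gamma(\tfrac{m+1}{2})/\Gamma(\tfrac m2)$ (the expected Euclidean norm of a standard Gaussian vector in $\mathbb{R}^m$), and fix $0<t<\sqrt{m-1}-\sqrt{\delta}$. Define $$\ell(t)=2\|\mathbf{z}\|_2\,\frac{\sqrt{\delta}+t}{\sqrt{m-1}-\sqrt{\delta}-t}.$$ Suppose $\mathbf{g}\in\mathbb{R}^m$ and $\mathbf{h}\in\mathbb{R}^n$ satisfy: (1) $\|\mathbf{g}\|_2\ge\gamma_m-t/4$; (2) $\mathrm{dist}(\mathbf{h},\lambda\partial f(\mathbf{x}_0))\le\sqrt{\delta}+t/4$; (3) $\mathbf{g}^T\bar{\mathbf{z}}\le (t/4)\|\bar{\mathbf{z}}\|_2$. Then $$\mathcal{L}(t;\mathbf{g},\mathbf{h}):=\inf_{\alpha\ge\ell(t)}\Big\{\sqrt{\alpha^2\|\mathbf{g}\|_2^2+\|\bar{\mathbf{z}}\|_2^2-2\alpha\,\mathbf{g}^T\bar{\mathbf{z}}}-\alpha\,\mathrm{dist}(\mathbf{h},\lambda\partial f(\mathbf{x}_0))\Big\}>\|\bar{\mathbf{z}}\|_2.$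$
   Context: For a convex $f:\mathbb{R}^n\to\mathbb{R}$, the subdifferential at $\mathbf{x}_0$ is $\partial f(\mathbf{x}_0)=\{\mathbf{s}\in\mathbb{R}^n: f(\mathbf{x}_0+\mathbf{w})\ge f(\mathbf{x}_0)+\mathbf{s}^T\mathbf{w}\ \forall \mathbf{w}\in\mathbb{R}^n\}$, and for $\lambda\ge0$, $\lambda\partial f(\mathbf{x}_0)=\{\lambda\mathbf{s}:\mathbf{s}\in\partial f(\mathbf{x}_0)\}$ (a nonempty, convex, compact set). For a nonempty closed convex set $\mathcal{C}\subset\mathbb{R}^n$, $\mathrm{dist}(\mathbf{v},\mathcal{C})=\min_{\mathbf{s}\in\mathcal{C}}\|\mathbf{v}-\mathbf{s}\|_2$, and the Gaussian squared distance is $\delta(\mathcal{C})=\mathbb{E}_{\mathbf{h}}[\mathrm{dist}^2(\mathbf{h},\mathcal{C})]$, where $\mathbf{h}\in\mathbb{R}^n$ has i.i.d. $\mathcal{N}(0,1)$ entries. *)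

(* Defs.v *)
From Stdlib Require Import Reals Lra ClassicalEpsilon.
Open Scope R_scope.

(* Vectors of R^n are represented as functions nat -> R; only the
   coordinates 0..n-1 are meaningful (all operations below only read them). *)
Fixpoint vsum (n : nat) (F : nat -> R) : R :=
  match n with O => 0 | S k => vsum k F + F k end.

Definition dot (n : nat) (u v : nat -> R) : R := vsum n (fun i => u i * v i).
Definition norm (n : nat) (u : nat -> R) : R := sqrt (dot n u u).
Definition vadd (u v : nat -> R) : nat -> R := fun i => u i + v i.
Definition vsub (u v : nat -> R) : nat -> R := fun i => u i - v i.
Definition vscale (a : R) (u : nat -> R) : nat -> R := fun i => a * u i.

(* a function on nat -> R that is genuinely a function on R^n *)
Definition depends_only_on (n : nat) (f : (nat -> R) -> R) : Prop :=
  forall x y, (forall i, (i < n)%nat -> x i = y i) -> f x = f y.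

Definition convex (f : (nat -> R) -> R) : Prop :=
  forall x y th, 0 <= th <= 1 ->
    f (vadd (vscale th x) (vscale (1 - th) y)) <= th * f x + (1 - th) * f y.

Definition subdiff (n : nat) (f : (nat -> R) -> R) (x0 s : nat -> R) : Prop :=
  forall w, f (vadd x0 w) >= f x0 + dot n s w.

Definition scaled_subdiff (n : nat) (lam : R) (f : (nat -> R) -> R) (x0 : nat -> R)
  : (nat -> R) -> Prop :=
  fun v => exists s, subdiff n f x0 s /\ v = vscale lam s.

Definition is_min_dist (n : nat) (C : (nat -> R) -> Prop) (v : nat -> R) (d : R) : Prop :=
  (exists s, C s /\ d = norm n (vsub v s)) /\
  (forall s, C s -> d <= norm n (vsub v s)).

Definition setdist (n : nat) (C : (nat -> R) -> Prop) (v : nat -> R) : R :=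
  epsilon (inhabits 0) (is_min_dist n C v).

(* Gaussian expectation on R^n, as an iterated (improper Riemann) integral
   against the standard normal density:  gauss_exp n F v  <->  E[F(h)] = v. *)
Definition gauss_density (x : R) : R := exp (- (x ^ 2) / 2) / sqrt (2 * PI).

Definition improper_int (F : R -> R) (l : R) : Prop :=
  (forall a b, inhabited (Riemann_integrable F a b)) /\
  forall eps, 0 < eps -> exists A, forall a b (pr : Riemann_integrable F a b),
      a <= - A -> A <= b -> Rabs (RiemannInt pr - l) < eps.

Definition vcons (x : R) (y : nat -> R) : nat -> R :=
  fun i => match i with O => x | S k => y k end.

Fixpoint gauss_exp (n : nat) (F : (nat -> R) -> R) (v : R) : Prop :=
  match n with
  | O => v = F (fun _ => 0)
  | S k => exists G : R -> R,
      (forall x, gauss_exp k (fun y => F (vcons x y)) (G x)) /\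
      improper_int (fun x => G x * gauss_density x) v
  end.

(* gamma_half k = Gamma(k/2) for k >= 1, via Gamma(1/2) = sqrt pi, Gamma(1) = 1,
   Gamma(x+1) = x Gamma(x). *)
Fixpoint gamma_half (k : nat) : R :=
  match k with
  | O => 0
  | S O => sqrt PI
  | S (S O) => 1
  | S (S j) => INR j / 2 * gamma_half j
  end.

Definition gamma_m (m : nat) : R := sqrt 2 * gamma_half (S m) / gamma_half m.

Definition is_glb (E : R -> Prop) (l : R) : Prop :=
  (forall x, E x -> l <= x) /\ (forall b, (forall x, E x -> b <= x) -> b <= l).

(* Main.v *)
Require Import Defs.
From Stdlib Require Import Reals Lra Lia.
From Coquelicot Require Import Coquelicot.
Require Import Defs.
Open Scope R_scope.

Definition W n : R := RInt (fun x => sin x ^ n) 0 (PI/2).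

Lemma cont_sinpow n x : continuous (fun x => sin x ^ n) x.
Proof.
  apply (ex_derive_continuous (K:=R_AbsRing) (V:=R_NormedModule) (fun x => sin x ^ n)). eexists. apply is_derive_pow. apply is_derive_sin.
Qed.

Lemma ex_W n : ex_RInt (fun x => sin x ^ n) 0 (PI/2).
Proof. apply (ex_RInt_continuous (V:=R_CompleteNormedModule)). intros; apply cont_sinpow. Qed.

Lemma W_rec n : INR (S (S n)) * W (S (S n)) = INR (S n) * W n.
Proof.
  set (F := fun x => - cos x * sin x ^ (S n)).
  set (df := fun x => INR (S (S n)) * sin x ^ (S (S n)) - INR (S n) * sin x ^ n).
  assert (H : is_RInt df 0 (PI/2) (minus (F (PI/2)) (F 0))).
  { apply (is_RInt_derive (V:=R_CompleteNormedModule)).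
    - intros x _. unfold F, df.
      auto_derive; auto.
      change (match n with | 0%nat => 1 | S _ => INR n + 1 end) with (INR (S n)).
      assert (Hc : cos x * cos x = 1 - sin x * sin x) by (pose proof (sin2_cos2 x); unfold Rsqr in *; lra).
      replace (- cos x * (1 * cos x * (INR (S n) * sin x ^ n))) with (-(cos x * cos x) * (INR (S n) * sin x ^ n)) by ring.
      rewrite Hc, !S_INR, <- !tech_pow_Rmult. ring.
    - intros x _. unfold df.
      apply (continuous_minus (fun x => INR (S (S n)) * sin x ^ (S (S n))) (fun x => INR (S n) * sin x ^ n)).
      + apply (continuous_scal_r (INR (S (S n))) (fun x => sin x ^ (S (S n)))). apply cont_sinpow.
      + apply (continuous_scal_r (INR (S n)) (fun x => sin x ^ n)). apply cont_sinpow. }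
  apply (is_RInt_unique (V:=R_CompleteNormedModule)) in H.
  unfold df in H.
  rewrite (RInt_minus (V:=R_CompleteNormedModule) (fun x => INR (S (S n)) * sin x ^ (S (S n))) (fun x => INR (S n) * sin x ^ n)) in H.
  2: { apply (ex_RInt_scal (V:=R_CompleteNormedModule) (fun x => sin x ^ (S (S n)))). apply ex_W. }
  2: { apply (ex_RInt_scal (V:=R_CompleteNormedModule) (fun x => sin x ^ n)). apply ex_W. }
  rewrite (RInt_scal (V:=R_CompleteNormedModule) (fun x => sin x ^ (S (S n)))) in H by apply ex_W.
  rewrite (RInt_scal (V:=R_CompleteNormedModule) (fun x => sin x ^ n)) in H by apply ex_W.
  assert (E: minus (F (PI/2)) (F 0) = 0).
  { unfold F, minus, plus, opp; simpl. rewrite cos_PI2, sin_0. ring. }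
  rewrite E in H.
  assert (H' : INR (S (S n)) * RInt (fun x => sin x ^ (S (S n))) 0 (PI/2) - INR (S n) * RInt (fun x => sin x ^ n) 0 (PI/2) = 0) by exact H.
  unfold W. lra.
Qed.

Lemma W0 : W 0 = PI/2.
Proof.
  unfold W. simpl. rewrite (RInt_const (V:=R_CompleteNormedModule)).
  change (scal (PI/2 - 0) 1) with ((PI/2 - 0) * 1). ring.
Qed.

Lemma W1 : W 1 = 1.
Proof.
  unfold W.
  assert (H : is_RInt (fun x => sin x ^ 1) 0 (PI/2) (minus ((fun x => - cos x) (PI/2)) ((fun x => - cos x) 0))).
  { apply (is_RInt_derive (V:=R_CompleteNormedModule) (fun x => - cos x)).
    - intros x _. auto_derive; auto. ring.
    - intros x _. apply cont_sinpow. }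
  apply (is_RInt_unique (V:=R_CompleteNormedModule)) in H. rewrite H.
  change (- cos (PI/2) - - cos 0 = 1). rewrite cos_PI2, cos_0. ring.
Qed.

Lemma W_pos n : 0 < W n.
Proof.
  assert (forall k, 0 < W k /\ 0 < W (S k)).
  { induction k.
    - rewrite W0, W1. pose proof PI_RGT_0. lra.
    - destruct IHk as [H1 H2]. split. exact H2.
      pose proof (W_rec k) as H. pose proof (pos_INR k).
      rewrite !S_INR in H.
      apply (Rmult_lt_reg_l (INR k + 1 + 1)). lra.
      rewrite H, Rmult_0_r. apply Rmult_lt_0_compat; lra. }
  exact (proj1 (H n)).
Qed.

Lemma W_ineq k c : 0 < c -> W (S k) <= (c * W k + W (S (S k)) / c) / 2.
Proof.
  intros Hc.
  set (g := fun x => plus (scal (c/2) (sin x ^ k)) (scal (/(2*c)) (sin x ^ (S (S k))))).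
  assert (Hg : is_RInt g 0 (PI/2) (plus (scal (c/2) (W k)) (scal (/(2*c)) (W (S (S k)))))).
  { apply (is_RInt_plus (V:=R_CompleteNormedModule)); apply (is_RInt_scal (V:=R_CompleteNormedModule));
    apply (RInt_correct (V:=R_CompleteNormedModule)); apply ex_W. }
  assert (Hle : RInt (fun x => sin x ^ (S k)) 0 (PI/2) <= RInt g 0 (PI/2)).
  { apply RInt_le.
    - pose proof PI_RGT_0; lra.
    - apply ex_W.
    - eexists; exact Hg.
    - intros x Hx. unfold g, plus, scal; simpl. unfold mult; simpl.
      assert (0 <= sin x) by (apply sin_ge_0; lra).
      assert (0 <= sin x ^ k) by (apply pow_le; auto).
      assert (E : c / 2 * sin x ^ k + / (2 * c) * (sin x * (sin x * sin x ^ k)) - sin x * sin x ^ k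
                  = sin x ^ k * ((c - sin x) * (c - sin x)) / (2 * c)) by (field; lra).
      assert (0 <= sin x ^ k * ((c - sin x) * (c - sin x)) / (2 * c)).
      { apply Rmult_le_pos. apply Rmult_le_pos; auto. apply Rle_0_sqr.
        left. apply Rinv_0_lt_compat. lra. }
      lra. }
  apply (is_RInt_unique (V:=R_CompleteNormedModule)) in Hg. rewrite Hg in Hle.
  unfold W at 1. change (RInt (fun x => sin x ^ S k) 0 (PI / 2) <= c/2 * W k + /(2*c) * W (S (S k))) in Hle.
  replace ((c * W k + W (S (S k)) / c) / 2) with (c/2 * W k + /(2*c) * W (S (S k))) by (field; lra).
  exact Hle.
Qed.
Lemma gh_pos k : (1 <= k)%nat -> 0 < gamma_half k.
Proof.
  assert (forall j, 0 < gamma_half (S j) /\ 0 < gamma_half (S (S j))).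
  { induction j.
    - simpl. split; [apply sqrt_lt_R0, PI_RGT_0 | lra].
    - destruct IHj as [H1 H2]. split. exact H2.
      change (gamma_half (S (S (S j)))) with (INR (S j) / 2 * gamma_half (S j)).
      apply Rmult_lt_0_compat; auto. pose proof (lt_0_INR (S j) ltac:(lia)). lra. }
  intros Hk. destruct k. lia. exact (proj1 (H k)).
Qed.

Lemma gh_W n : 2 * W n * gamma_half (S (S n)) = sqrt PI * gamma_half (S n).
Proof.
  assert (forall k, 2 * W k * gamma_half (S (S k)) = sqrt PI * gamma_half (S k) /\
                    2 * W (S k) * gamma_half (S (S (S k))) = sqrt PI * gamma_half (S (S k))).
  { induction k.
    - rewrite W0, W1. simpl. split.
      + pose proof (sqrt_sqrt PI (Rlt_le _ _ PI_RGT_0)). lra.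
      + lra.
    - destruct IHk as [H1 H2]. split. exact H2.
      change (gamma_half (S (S (S (S k))))) with (INR (S (S k)) / 2 * gamma_half (S (S k))).
      change (gamma_half (S (S (S k)))) with (INR (S k) / 2 * gamma_half (S k)).
      replace (2 * W (S (S k)) * (INR (S (S k)) / 2 * gamma_half (S (S k))))
        with ((INR (S (S k)) * W (S (S k))) * gamma_half (S (S k))) by field.
      rewrite W_rec.
      replace (INR (S k) * W k * gamma_half (S (S k))) with (INR (S k) / 2 * (2 * W k * gamma_half (S (S k)))) by field.
      rewrite H1. ring. }
  exact (proj1 (H n)).
Qed.

Lemma W_prod n : W n * W (S n) = PI / (2 * INR (S n)).
Proof.
  induction n.
  - rewrite W0, W1. simpl. field.
  - pose proof (W_rec n) as H. pose proof (lt_0_INR (S (S n)) ltac:(lia)).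
    pose proof (lt_0_INR (S n) ltac:(lia)).
    assert (E : W (S (S n)) = INR (S n) / INR (S (S n)) * W n) by (apply (Rmult_eq_reg_l (INR (S (S n)))); [rewrite H; field; lra | lra]).
    rewrite E.
    replace (W (S n) * (INR (S n) / INR (S (S n)) * W n)) with (INR (S n) / INR (S (S n)) * (W n * W (S n))) by ring.
    rewrite IHn. field. lra.
Qed.

Lemma gamma_bound m : (2 <= m)%nat ->
  0 <= gamma_m m /\ sqrt (INR m) * sqrt (INR m - 1) <= gamma_m m ^ 2.
Proof.
  intros Hm. destruct m as [|[|k]]; try lia.
  set (p := sqrt (INR (S (S k)))). set (q := sqrt (INR (S (S k)) - 1)).
  assert (Hp2 : p * p = INR k + 2).
  { unfold p. rewrite sqrt_sqrt. rewrite !S_INR; ring. rewrite !S_INR; pose proof (pos_INR k); lra. }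
  assert (Hq2 : q * q = INR k + 1).
  { unfold q. rewrite sqrt_sqrt. rewrite !S_INR; ring. rewrite !S_INR; pose proof (pos_INR k); lra. }
  assert (Hp : 0 < p). { unfold p. apply sqrt_lt_R0. apply lt_0_INR. lia. }
  assert (Hq : 0 < q). { unfold q. apply sqrt_lt_R0. rewrite !S_INR; pose proof (pos_INR k); lra. }
  pose proof (W_pos k) as Hw0. pose proof (W_pos (S k)) as Ha. pose proof (W_pos (S (S k))) as Hb.
  pose proof (W_rec k) as Hr. rewrite !S_INR in Hr.
  pose proof (W_ineq k (q / p) ltac:(apply Rdiv_lt_0_compat; auto)) as Hi.
  pose proof (W_prod (S k)) as Hpr. rewrite !S_INR in Hpr.
  pose proof (gh_W (S k)) as Hg.
  pose proof (gh_pos (S (S k)) ltac:(lia)) as Hgp.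
  set (a := W (S k)) in *. set (b := W (S (S k))) in *. set (w0 := W k) in *.
  assert (Hab : q * a <= p * b).
  { assert (Ew : w0 = p * p / (q * q) * b). { rewrite Hp2, Hq2. assert (0 <= INR k) by apply pos_INR.
      apply (Rmult_eq_reg_l (INR k + 1)); [|lra].
      replace ((INR k + 1) * ((INR k + 2) / (INR k + 1) * b)) with ((INR k + 1 + 1) * b) by (field; lra). lra. }
    rewrite Ew in Hi.
    replace ((q / p * (p * p / (q * q) * b) + b / (q / p)) / 2) with (p / q * b) in Hi by (field; lra).
    apply (Rmult_le_compat_l q) in Hi; [|lra].
    replace (q * (p / q * b)) with (p * b) in Hi by (field; lra). exact Hi. }
  assert (Eg : gamma_m (S (S k)) = sqrt 2 * sqrt PI / (2 * a)).
  { unfold gamma_m. 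
    assert (E2 : gamma_half (S (S (S k))) = sqrt PI * gamma_half (S (S k)) / (2 * a)) by (rewrite <- Hg; field; lra).
    rewrite E2. field. lra. }
  rewrite Eg. split.
  - apply Rmult_le_pos. apply Rmult_le_pos; apply sqrt_pos. left; apply Rinv_0_lt_compat; lra.
  - replace ((sqrt 2 * sqrt PI / (2 * a)) ^ 2) with ((sqrt 2 * sqrt 2) * (sqrt PI * sqrt PI) / (4 * a * a)) by (field; lra).
    rewrite !sqrt_sqrt; [|pose proof PI_RGT_0; lra|lra].
    fold p q.
    assert (EPI : PI = 2 * (INR k + 2) * a * b) by (replace (2 * (INR k + 2) * a * b) with (2 * (INR k + 2) * (a * b)) by ring; rewrite Hpr; field; pose proof (pos_INR k); lra).
    rewrite EPI. rewrite <- Hp2.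
    replace (2 * (2 * (p * p) * a * b) / (4 * a * a)) with (p * (p * b) / a) by (field; lra).
    apply (Rmult_le_reg_r a); auto.
    replace (p * (p * b) / a * a) with (p * (p * b)) by (field; lra).
    nra.
Qed.
Lemma core (p q u t G D c nz gam : R) :
  0 < nz -> 0 < q -> q <= p -> 0 <= u -> 0 < t -> t < q - u ->
  0 <= gam -> p * q <= gam ^ 2 -> gam - t/4 <= G -> D <= u + t/4 ->
  c <= t/4 * (p * nz) ->
  exists eps, 0 < eps /\ forall alpha,
    2 * nz * (u + t) / (q - u - t) <= alpha ->
    p * nz + eps <= sqrt (alpha ^ 2 * G ^ 2 + (p * nz) ^ 2 - 2 * alpha * c) - alpha * D.
Proof.
  intros Hnz Hq Hpq Hu Ht Htq Hg Hgam HG HD Hc.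
  set (Z := p * nz).
  assert (HZ : 0 < Z) by (unfold Z; apply Rmult_lt_0_compat; lra).
  set (D' := Rmax D 0).
  assert (HD0 : 0 <= D') by apply Rmax_r.
  assert (HD1 : D' <= u + t/4) by (apply Rmax_lub; lra).
  assert (HDD : D <= D') by apply Rmax_l.
  set (g0 := sqrt (p * q)).
  assert (Hg0 : g0 * g0 = p * q) by (apply sqrt_sqrt; nra).
  assert (Hg0p : 0 <= g0) by apply sqrt_pos.
  assert (Hg0g : g0 <= gam).
  { destruct (Rle_or_lt g0 gam) as [h|h]; auto. simpl in Hgam. nra. }
  assert (Hg0q : q <= g0) by nra.
  assert (Hg0pp : g0 <= p) by nra.
  set (ell := 2 * nz * (u + t) / (q - u - t)).
  assert (Hell : 0 < ell) by (unfold ell; apply Rdiv_lt_0_compat; nra).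
  set (K := G ^ 2 - D' ^ 2).
  set (B := Z * (t/2 + 2 * D')).
  assert (HK : (g0 - t/4) ^ 2 - (u + t/4) ^ 2 <= K).
  { unfold K. assert (0 <= g0 - t/4) by lra. nra. }
  assert (Hkey : p * (q - u - t) * (2 * u + t) < 2 * (u + t) * ((g0 - t/4) ^ 2 - (u + t/4) ^ 2)).
  { assert (E : 2 * (u + t) * ((g0 - t/4) ^ 2 - (u + t/4) ^ 2) - p * (q - u - t) * (2 * u + t)
              = p * q * t + (u + t) * u * (2 * p - 2 * u - t) + (u + t) * t * (p - g0)).
    { replace ((g0 - t/4) ^ 2) with (g0 * g0 - g0 * t / 2 + t * t / 16) by field.
      rewrite Hg0. field. }
    assert (0 < p * q * t) by (apply Rmult_lt_0_compat; nra).
    assert (0 <= (u + t) * u * (2 * p - 2 * u - t)) by (apply Rmult_le_pos; nra).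
    assert (0 <= (u + t) * t * (p - g0)) by (apply Rmult_le_pos; nra).
    lra. }
  set (mu := ell * K - B).
  assert (Hmu : 0 < mu).
  { unfold mu, ell, B, Z.
    assert (Hs : 0 < q - u - t) by lra.
    assert (E : 2 * nz * (u + t) / (q - u - t) * K = nz * (2 * (u + t) * K) / (q - u - t)) by (field; lra).
    rewrite E.
    assert (H1 : p * (q - u - t) * (t/2 + 2 * D') <= p * (q - u - t) * (2 * u + t)).
    { apply Rmult_le_compat_l; nra. }
    assert (H2 : 2 * (u + t) * ((g0 - t/4) ^ 2 - (u + t/4) ^ 2) <= 2 * (u + t) * K) by (apply Rmult_le_compat_l; lra).
    apply Rlt_Rminus.
    apply (Rmult_lt_reg_r (q - u - t)); auto.
    replace (nz * (2 * (u + t) * K) / (q - u - t) * (q - u - t)) with (nz * (2 * (u + t) * K)) by (field; lra).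
    replace (p * nz * (t / 2 + 2 * D') * (q - u - t)) with (nz * (p * (q - u - t) * (t/2 + 2 * D'))) by ring.
    apply Rmult_lt_compat_l; lra. }
  assert (HKp : 0 < K).
  { destruct (Rle_or_lt K 0) as [h|h]; auto.
    assert (ell * K <= 0) by nra. unfold mu, B in Hmu.
    assert (0 <= Z * (t / 2 + 2 * D')) by (apply Rmult_le_pos; lra). lra. }
  set (eps := Rmin Z (Rmin (mu / (4 * (D' + 1))) (ell * mu / (6 * Z)))).
  assert (He1 : eps <= Z) by apply Rmin_l.
  assert (He2 : eps <= mu / (4 * (D' + 1))) by (eapply Rle_trans; [apply Rmin_r|apply Rmin_l]).
  assert (He3 : eps <= ell * mu / (6 * Z)) by (eapply Rle_trans; [apply Rmin_r|apply Rmin_r]).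
  assert (Hep : 0 < eps).
  { unfold eps. apply Rmin_glb_lt; auto. apply Rmin_glb_lt.
    apply Rdiv_lt_0_compat; lra. apply Rdiv_lt_0_compat; nra. }
  exists eps. split; auto.
  intros alpha Ha. fold ell in Ha.
  assert (Ha0 : 0 < alpha) by lra.
  assert (Ham : mu <= alpha * K - B) by (unfold mu; nra).
  set (R0 := alpha ^ 2 * G ^ 2 + Z ^ 2 - 2 * alpha * c).
  assert (HR : (Z + alpha * D') ^ 2 + alpha * mu <= R0).
  { unfold R0. assert (2 * alpha * c <= alpha * t / 2 * Z) by (unfold Z in *; nra).
    assert (alpha * mu <= alpha * (alpha * K - B)) by (apply Rmult_le_compat_l; lra).
    unfold K, B in *. nra. }
  assert (Hb1 : 2 * eps * D' <= mu / 2).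
  { assert (eps * (4 * (D' + 1)) <= mu).
    { apply (Rmult_le_compat_r (4 * (D' + 1))) in He2; [|lra].
      replace (mu / (4 * (D' + 1)) * (4 * (D' + 1))) with mu in He2 by (field; lra). exact He2. }
    nra. }
  assert (Hb2 : 3 * eps * Z <= alpha * mu / 2).
  { apply (Rmult_le_compat_r (6 * Z)) in He3; [|lra].
    replace (ell * mu / (6 * Z) * (6 * Z)) with (ell * mu) in He3 by (field; lra).
    assert (ell * mu <= alpha * mu) by (apply Rmult_le_compat_r; lra). nra. }
  assert (Hsq : (Z + alpha * D' + eps) ^ 2 <= R0).
  { assert (eps * eps <= eps * Z) by (apply Rmult_le_compat_l; lra).
    assert (alpha * (2 * eps * D') <= alpha * (mu / 2)) by (apply Rmult_le_compat_l; lra).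
    nra. }
  assert (Hs : Z + alpha * D' + eps <= sqrt R0).
  { rewrite <- (sqrt_pow2 (Z + alpha * D' + eps)); [|nra]. apply sqrt_le_1_alt. exact Hsq. }
  assert (alpha * D <= alpha * D') by (apply Rmult_le_compat_l; lra).
  fold Z. fold R0. lra.
Qed.

Lemma vsum_ext n F G : (forall i, F i = G i) -> vsum n F = vsum n G.
Proof. intros H; induction n; simpl; auto. rewrite IHn, H; auto. Qed.

Lemma vsum_scal n c F : vsum n (fun i => c * F i) = c * vsum n F.
Proof. induction n; simpl. ring. rewrite IHn. ring. Qed.

Lemma vsum_nonneg n F : (forall i, (i < n)%nat -> 0 <= F i) -> 0 <= vsum n F.
Proof.
  induction n; simpl; intros H. lra.
  assert (0 <= vsum n F) by (apply IHn; intros; apply H; lia).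
  assert (0 <= F n) by (apply H; lia). lra.
Qed.

Lemma vsum_pos n F i : (forall j, (j < n)%nat -> 0 <= F j) -> (i < n)%nat -> 0 < F i -> 0 < vsum n F.
Proof.
  induction n; simpl; intros H Hi Hf. lia.
  assert (0 <= vsum n F) by (apply vsum_nonneg; intros; apply H; lia).
  assert (0 <= F n) by (apply H; lia).
  destruct (Nat.eq_dec i n) as [->|Hne]. lra.
  assert (0 < vsum n F) by (apply IHn; [intros; apply H; lia | lia | exact Hf]). lra.
Qed.

Lemma norm_scale m c z : 0 <= c -> norm m (vscale c z) = c * norm m z.
Proof.
  intros Hc. unfold norm, dot, vscale.
  rewrite (vsum_ext m _ (fun i => (c * c) * (z i * z i))) by (intros; ring).
  rewrite vsum_scal. rewrite sqrt_mult_alt by nra. rewrite sqrt_square by lra. reflexivity.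
Qed.

Lemma norm_pos m z : (exists i, (i < m)%nat /\ z i <> 0) -> 0 < norm m z.
Proof.
  intros [i [Hi Hz]]. unfold norm. apply sqrt_lt_R0. unfold dot.
  apply (vsum_pos m _ i); auto. intros; nra. nra.
Qed.

Theorem lemma4 (m n : nat) (f : (nat -> R) -> R) (x0 : nat -> R) (lam : R)
  (z g h : nat -> R) (delta t : R) :
  (2 <= m)%nat ->
  depends_only_on n f -> convex f ->
  (exists x, f x < f x0) ->
  0 <= lam ->
  (exists i, (i < m)%nat /\ z i <> 0) ->
  gauss_exp n (fun v => (setdist n (scaled_subdiff n lam f x0) v) ^ 2) delta ->
  0 < t -> t < sqrt (INR m - 1) - sqrt delta ->
  norm m g >= gamma_m m - t / 4 ->
  setdist n (scaled_subdiff n lam f x0) h <= sqrt delta + t / 4 ->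
  dot m g (vscale (sqrt (INR m)) z) <= t / 4 * norm m (vscale (sqrt (INR m)) z) ->
  exists L,
    is_glb (fun r => exists alpha,
               2 * norm m z * (sqrt delta + t) / (sqrt (INR m - 1) - sqrt delta - t)
                 <= alpha /\
               r = sqrt (alpha ^ 2 * norm m g ^ 2
                         + norm m (vscale (sqrt (INR m)) z) ^ 2
                         - 2 * alpha * dot m g (vscale (sqrt (INR m)) z))
                   - alpha * setdist n (scaled_subdiff n lam f x0) h) L
    /\ L > norm m (vscale (sqrt (INR m)) z).
Proof.
  intros Hm _ _ _ _ Hz _ Ht Htq HG HD Hc.
  destruct (gamma_bound m Hm) as [Hg0 Hg2].
  pose proof (norm_pos m z Hz) as Hnz.
  assert (Hmr : 2 <= INR m) by (apply (le_INR 2 m) in Hm; simpl in Hm; lra).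
  rewrite norm_scale in * by apply sqrt_pos.
  set (p := sqrt (INR m)) in *. set (q := sqrt (INR m - 1)) in *.
  assert (Hq : 0 < q) by (apply sqrt_lt_R0; lra).
  assert (Hqp : q <= p) by (apply sqrt_le_1_alt; lra).
  destruct (core p q (sqrt delta) t (norm m g) (setdist n (scaled_subdiff n lam f x0) h)
              (dot m g (vscale p z)) (norm m z) (gamma_m m))
    as [eps [Heps Hall]]; auto; try lra.
  { apply sqrt_pos. }
  set (ell := 2 * norm m z * (sqrt delta + t) / (q - sqrt delta - t)) in *.
  set (E := fun r => exists alpha, ell <= alpha /\
               r = sqrt (alpha ^ 2 * norm m g ^ 2 + (p * norm m z) ^ 2
                         - 2 * alpha * dot m g (vscale p z))
                   - alpha * setdist n (scaled_subdiff n lam f x0) h).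
  assert (Hlow : forall x, E x -> p * norm m z + eps <= x).
  { intros x [alpha [Ha ->]]. apply Hall. exact Ha. }
  set (E' := fun y => E (- y)).
  assert (Hb : bound E').
  { exists (- (p * norm m z + eps)). intros y Hy. apply Hlow in Hy. lra. }
  assert (Hne : exists y, E' y).
  { exists (- (sqrt (ell ^ 2 * norm m g ^ 2 + (p * norm m z) ^ 2
                         - 2 * ell * dot m g (vscale p z))
                   - ell * setdist n (scaled_subdiff n lam f x0) h)).
    unfold E', E. exists ell. split. lra. ring. }
  destruct (completeness E' Hb Hne) as [M [HM1 HM2]].
  exists (- M). split; [split|].
  - intros x Hx. assert (E' (- x)) by (unfold E'; rewrite Ropp_involutive; exact Hx).
    apply HM1 in H. lra.
  - intros b Hb'. assert (M <= - b).
    { apply HM2. intros y Hy. apply Hb' in Hy. lra. }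
    lra.
  - assert (M <= - (p * norm m z + eps)).
    { apply HM2. intros y Hy. apply Hlow in Hy. lra. }
    lra.
Qed.
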